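(* Let $l^{(u)}\in L_u$ for each $u\in U^I_{\min}$. Then $\sum_{u\in U^I_{\min}}l^{(u)}={\bf 0}$ if and only if $l^{(u)}={\bf 0}$ for all $u\in U^I_{\min}$.
   Context: $n\ge1$, $d\ge2$, $I\subseteq\{0,\dots,n\}$; ${\bf a}_1,\dots,{\bf a}_N\in\mathbb{N}^{n+1}$ with coordinate sums $d$, ${\bf a}_j^+=({\bf a}_j,1)\in\mathbb{N}^{n+2}$. $\mu_I$: $\lceil|I|/d\rceil=\mu_I+1$. $U^I_{\min}$: the set of $u\in\mathbb{N}^{n+2}$ with $\sum_{i=0}^nu_i=du_{n+1}$, $u_i>0$ for $i\in I$, and $u_{n+1}=\mu_I+1$. Hypothesis: $N\ge\mu_I+|U^I_{\min}|$ and for each $u\in U^I_{\min}$ there is $k_u$, $1\le k_u\le|U^I_{\min}|$, with $u={\bf a}^+_{\mu_I+k_u}+\sum_{j=1}^{\mu_I}{\bf a}_j^+$. For $u\in U^I_{\min}$, $L_u$ is the set of $l\in\mathbb{Z}^N$ with $\sum_{k=1}^Nl_k{\bf a}_k^+={\bf 0}$, $l_j\le0$ for $j=1,\dots,\mu_I$ and for $j=\mu_I+k_u$, and $l_j\ge0$ for all other $j$. *)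

(* Defs.v *)
From mathcomp Require Import all_boot all_order all_algebra.
Set Implicit Arguments. Unset Strict Implicit. Unset Printing Implicit Defensive.
Import Order.TTheory GRing.Theory Num.Theory.

Definition ceil_div (m d : nat) : nat := (m + d.-1) %/ d.

(* mu_I : ceil(|I|/d) = mu_I + 1  (requires |I| >= 1) *)
Definition mu (n d : nat) (I : {set 'I_n.+1}) : nat := (ceil_div #|I| d).-1.

(* Coordinates of any u in U^I_min are bounded by d*(mu_I+1), so U^I_min is
   exactly represented inside the finite type of functions 'I_(n+2) -> 'I_(bnd). *)
Definition bnd (n d : nat) (I : {set 'I_n.+1}) : nat := (d * (mu d I).+1).+1.

(* the (n+1)-th coordinate, i.e. index n+1 of N^{n+2} with indices 0..n+1 *)
Definition last_ix (n : nat) : 'I_n.+2 := ord_max.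

Definition Umin (n d : nat) (I : {set 'I_n.+1}) : {set {ffun 'I_n.+2 -> 'I_(bnd d I)}} :=
  [set u : {ffun 'I_n.+2 -> 'I_(bnd d I)} |
     [&& (\sum_(i < n.+1) (u (widen_ord (leqnSn n.+1) i) : nat) == d * u (last_ix n)),
         [forall i in I, 0 < (u (widen_ord (leqnSn n.+1) i) : nat)] &
         ((u (last_ix n) : nat) == (mu d I).+1)]].

(* a^+_j = (a_j, 1) in N^{n+2}; a is indexed by j = 1..N (paper's indexing) *)
Definition aplus (n : nat) (a : nat -> 'I_n.+1 -> nat) (j : nat) (i : 'I_n.+2) : nat :=
  if (i : nat) <= n then a j (inord i) else 1.

(* l (indexed by 1..N) belongs to L_u, where k_u = ku *)
Definition inL (n N m : nat) (a : nat -> 'I_n.+1 -> nat) (ku : nat) (l : nat -> int) : Prop :=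
  [/\ (forall i : 'I_n.+2, (\sum_(1 <= j < N.+1) l j * (aplus a j i)%:Z)%R = 0%R),
      (forall j, 1 <= j <= N -> (j <= m) || (j == m + ku) -> (l j <= 0)%R) &
      (forall j, 1 <= j <= N -> ~~ ((j <= m) || (j == m + ku)) -> (0 <= l j)%R)].

(* Main.v *)
Require Import Defs.
From mathcomp Require Import all_boot all_order all_algebra.
Import Order.TTheory GRing.Theory Num.Theory.

Lemma psum_seq0 (r : seq nat) (F : nat -> int) :
  (forall i, i \in r -> (0 <= F i)%R) -> (\sum_(i <- r) F i)%R = 0%R ->
  forall i, i \in r -> F i = 0%R.
Proof.
move=> H0 Hs i ir.
move: Hs; rewrite big_seq_cond => /eqP; rewrite psumr_eq0.
  by move/allP => /(_ i ir); rewrite ir /= => /eqP.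
by move=> j /andP[jr _]; apply: H0.
Qed.

Theorem proposition7p7 (n d N : nat) (I : {set 'I_n.+1})
  (a : nat -> 'I_n.+1 -> nat)
  (k : {ffun 'I_n.+2 -> 'I_(bnd d I)} -> nat)
  (l : {ffun 'I_n.+2 -> 'I_(bnd d I)} -> nat -> int) :
  1 <= n -> 2 <= d -> 0 < #|I| ->
  (forall j, 1 <= j <= N -> \sum_(i < n.+1) a j i = d) ->
  mu d I + #|Umin d I| <= N ->
  (forall u, u \in Umin d I ->
     1 <= k u <= #|Umin d I| /\
     (forall i : 'I_n.+2,
        (u i : nat) = aplus a (mu d I + k u) i + \sum_(1 <= j < (mu d I).+1) aplus a j i)) ->
  (forall u, u \in Umin d I -> inL N (mu d I) a (k u) (l u)) ->
  ((forall j, 1 <= j <= N -> (\sum_(u in Umin d I) l u j)%R = 0%R) <->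
   (forall u, u \in Umin d I -> forall j, 1 <= j <= N -> l u j = 0%R)).
Proof.
move=> n1 d2 I0 asum Hcard Hk HL; split; last first.
  by move=> H j Hj; rewrite big1 // => u uU; exact: H u uU j Hj.
move=> H.
set M := mu d I in Hcard Hk HL *. set U := Umin d I in Hcard Hk HL H *.
have S1 : forall u, u \in U -> forall j, 1 <= j <= N -> j <= M -> l u j = 0%R.
  move=> u uU j Hj jM.
  have : (\sum_(v in U) (- l v j) = 0)%R by rewrite sumrN H // oppr0.
  move/psumr_eq0P => P.
  apply/eqP; rewrite -oppr_eq0; apply/eqP; apply: P => // v vU.
  case: (HL v vU) => _ Hn _; rewrite oppr_ge0; apply: Hn => //; by rewrite jM.
have S2 : forall u, u \in U -> forall j, 1 <= j <= N -> M < j ->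
    (forall v, v \in U -> j != M + k v) -> l u j = 0%R.
  move=> u uU j Hj jM Hv.
  move/psumr_eq0P: (H j Hj) => P; apply: P => // v vU.
  case: (HL v vU) => _ _ Hp; apply: Hp => //.
  by rewrite negb_or -ltnNge jM /= Hv.
set x := fun j (i : 'I_n.+2) => ((aplus a j i)%:Z)%R.
set phi := fun j => (\sum_(i < n.+2) x j i ^+ 2)%R.
set Q := fun u => (\sum_(j <- index_iota 1 N.+1) l u j * phi j)%R.
have SQ : (\sum_(u in U) Q u = 0)%R.
  rewrite /Q exchange_big /= big_seq big1 // => j.
  rewrite mem_index_iota => Hj; by rewrite -mulr_suml H // mul0r.
set psi := fun u j => (\sum_(i < n.+2) (x j i - x (M + k u) i) ^+ 2)%R.
have Sum0 : forall u, u \in U -> (\sum_(j <- index_iota 1 N.+1) l u j = 0)%R.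
  move=> u uU; case: (HL u uU) => R _ _.
  rewrite -[RHS](R (last_ix n)); apply: eq_bigr => j _.
  by rewrite /aplus /last_ix /= ltnn mulr1.
have QE : forall u, u \in U ->
    Q u = (\sum_(j <- index_iota 1 N.+1) l u j * psi u j)%R.
  move=> u uU; case: (HL u uU) => R _ _.
  apply/eqP; rewrite -subr_eq0 -sumrB; apply/eqP.
  transitivity (\sum_(j <- index_iota 1 N.+1) \sum_(i < n.+2)
      (l u j * (x j i * x j i) - l u j * (x j i * x j i - x j i * x (M + k u) i *+ 2
        + x (M + k u) i * x (M + k u) i)))%R.
    apply: eq_bigr => j _; rewrite -mulrBr /phi /psi -sumrB mulr_sumr; apply: eq_bigr => i _.
    by rewrite sqrrB mulrBr !expr2.
  rewrite exchange_big /= big1 // => i _.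
  have key : forall A B C : int, (A - (A - B + C) = B - C)%R.
    by move=> A B C; rewrite opprD opprB addrA (addrC A (B - A)%R) subrK.
  under eq_bigr do rewrite mulrDr mulrBr key.
  rewrite sumrB -!mulr_suml Sum0 // mul0r subr0.
  under eq_bigr do rewrite mulrnAr mulrA.
  by rewrite sumrMnl -mulr_suml R mul0r mul0rn.
have Tnn : forall u, u \in U -> forall j, j \in index_iota 1 N.+1 -> (0 <= l u j * psi u j)%R.
  move=> u uU j; rewrite mem_index_iota ltnS => Hj.
  case: (leqP j M) => jM; first by rewrite S1 // mul0r.
  have [->|jm] := eqVneq j (M + k u).
    by rewrite /psi big1 ?mulr0 // => i _; rewrite subrr expr0n.
  case: (HL u uU) => _ _ Hp; apply: mulr_ge0.
    by apply: Hp => //; rewrite negb_or -ltnNge jM.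
  by apply: sumr_ge0 => i _; apply: sqr_ge0.
have Qnn : forall u, u \in U -> (0 <= Q u)%R.
  move=> u uU; rewrite QE // big_seq; apply: sumr_ge0 => j; exact: Tnn.
have Q0 : forall u, u \in U -> Q u = 0%R.
  by move=> u uU; apply: (psumr_eq0P Qnn SQ uU).
have T0 : forall u, u \in U -> forall j, j \in index_iota 1 N.+1 -> (l u j * psi u j = 0)%R.
  move=> u uU; apply: psum_seq0; first exact: Tnn.
  by rewrite -QE // Q0.
have Neq : forall u, u \in U -> forall j, 1 <= j <= N -> j != M + k u -> l u j = 0%R.
  move=> u uU j Hj jm.
  case: (leqP j M) => jM; first exact: S1.
  case: (boolP [exists v in U, j == M + k v]) => [/existsP [v /andP[vU /eqP jv]]|/existsPn Hn]; last first.
    by apply: S2 => // v vU; move: (Hn v); rewrite vU.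
  have := T0 u uU j; rewrite mem_index_iota ltnS Hj => /(_ isT) /eqP.
  rewrite mulf_eq0 => /orP[/eqP //|/eqP Hpsi].
  exfalso; move: jm; apply/negP; rewrite negbK.
  have Heq : forall i, x j i = x (M + k u) i.
    move=> i; apply/eqP; rewrite -subr_eq0 -sqrf_eq0; apply/eqP.
    by apply: (psumr_eq0P _ Hpsi) => // i' _; exact: sqr_ge0.
  have uv : u = v.
    apply/ffunP => i; apply: ord_inj.
    case: (Hk u uU) => _ ->; case: (Hk v vU) => _ ->.
    congr (_ + _); rewrite -jv.
    by move: (Heq i) => /eqP; rewrite eqz_nat => /eqP.
  by rewrite jv uv.
move=> u uU j Hj.
have [->|jm] := eqVneq j (M + k u); last exact: Neq.
have := Sum0 u uU.
have mIn : M + k u \in index_iota 1 N.+1.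
  rewrite mem_index_iota ltnS; case: (Hk u uU) => /andP[k1 k2] _.
  apply/andP; split; first by rewrite addn_gt0 k1 orbT.
  by apply: leq_trans Hcard; rewrite leq_add2l.
rewrite (bigD1_seq (M + k u)) //= ?iota_uniq // big_seq_cond big1 ?addr0 //.
move=> j' /andP[j'in j'm]; apply: Neq => //.
by move: j'in; rewrite mem_index_iota ltnS.
Qed.
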